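(* Let $X$ be a set and $GDNP(X)$ the free GDN-Poisson algebra on $X$ (with unit $e$ for $\cdot$). For any $u\in[X]$ and $a_1,\dots,a_n\in X$ with $n\ge1$, $$u\circ(a_1\cdots a_n)=\sum_{i=1}^n(u\,a_1\cdots\widehat{a_i}\cdots a_n)\circ a_i-(n-1)(u\,a_1\cdots a_n)\circ e,$$ where juxtaposition denotes the product $\cdot$ and $\widehat{a_i}$ means $a_i$ is omitted.
   Context: A GDN-Poisson algebra is a vector space with bilinear products $\cdot,\circ$ such that $(\cdot)$ is commutative associative with unit $e$, $x\circ(y\circ z)-(x\circ y)\circ z=y\circ(x\circ z)-(y\circ x)\circ z$, $(x\circ y)\circ z=(x\circ z)\circ y$, $(x\cdot y)\circ z=x\cdot(y\circ z)$, and $(x\circ y)\cdot z-x\circ(y\cdot z)=(y\circ x)\cdot z-y\circ(x\cdot z)$. $[X]$ denotes the free commutative monoid on $X$ with unit $e$, viewed inside $GDNP(X)$ as $\cdot$-products of generators. *)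

(* Defs.v *)
(* The free GDN-Poisson algebra GDNP(X) over a field K is
   presented as formal terms modulo the smallest congruence generated by
   the vector-space axioms, bilinearity of both products, and the
   GDN-Poisson identities. *)
From mathcomp Require Import all_boot all_algebra.
Set Implicit Arguments. Unset Strict Implicit. Unset Printing Implicit Defensive.
Import GRing.Theory.
Local Open Scope ring_scope.

Inductive term (K X : Type) : Type :=
| tgen : X -> term K X
| te : term K X
| tzero : term K X
| tadd : term K X -> term K X -> term K X
| tscale : K -> term K X -> term K X
| tdot : term K X -> term K X -> term K X
| tcirc : term K X -> term K X -> term K X.

Arguments tgen {K X}. Arguments te {K X}. Arguments tzero {K X}.

Section Free.
Variables (K : fieldType) (X : Type).
Local Notation T := (term K X).

Definition tsub (x y : T) : T := tadd x (tscale (-1) y).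

Inductive gdnp_eq : T -> T -> Prop :=
| q_refl x : gdnp_eq x x
| q_sym x y : gdnp_eq x y -> gdnp_eq y x
| q_trans x y z : gdnp_eq x y -> gdnp_eq y z -> gdnp_eq x z
| q_add x x' y y' : gdnp_eq x x' -> gdnp_eq y y' -> gdnp_eq (tadd x y) (tadd x' y')
| q_scale a x x' : gdnp_eq x x' -> gdnp_eq (tscale a x) (tscale a x')
| q_dot x x' y y' : gdnp_eq x x' -> gdnp_eq y y' -> gdnp_eq (tdot x y) (tdot x' y')
| q_circ x x' y y' : gdnp_eq x x' -> gdnp_eq y y' -> gdnp_eq (tcirc x y) (tcirc x' y')
| v_addA x y z : gdnp_eq (tadd x (tadd y z)) (tadd (tadd x y) z)
| v_addC x y : gdnp_eq (tadd x y) (tadd y x)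
| v_add0 x : gdnp_eq (tadd tzero x) x
| v_addN x : gdnp_eq (tadd x (tscale (-1) x)) tzero
| v_scaleA a b x : gdnp_eq (tscale a (tscale b x)) (tscale (a * b) x)
| v_scale1 x : gdnp_eq (tscale 1 x) x
| v_scaleDr a x y : gdnp_eq (tscale a (tadd x y)) (tadd (tscale a x) (tscale a y))
| v_scaleDl a b x : gdnp_eq (tscale (a + b) x) (tadd (tscale a x) (tscale b x))
| b_dotDl x y z : gdnp_eq (tdot (tadd x y) z) (tadd (tdot x z) (tdot y z))
| b_dotDr x y z : gdnp_eq (tdot x (tadd y z)) (tadd (tdot x y) (tdot x z))
| b_dotZl a x y : gdnp_eq (tdot (tscale a x) y) (tscale a (tdot x y))
| b_dotZr a x y : gdnp_eq (tdot x (tscale a y)) (tscale a (tdot x y))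
| b_circDl x y z : gdnp_eq (tcirc (tadd x y) z) (tadd (tcirc x z) (tcirc y z))
| b_circDr x y z : gdnp_eq (tcirc x (tadd y z)) (tadd (tcirc x y) (tcirc x z))
| b_circZl a x y : gdnp_eq (tcirc (tscale a x) y) (tscale a (tcirc x y))
| b_circZr a x y : gdnp_eq (tcirc x (tscale a y)) (tscale a (tcirc x y))
| d_comm x y : gdnp_eq (tdot x y) (tdot y x)
| d_assoc x y z : gdnp_eq (tdot x (tdot y z)) (tdot (tdot x y) z)
| d_unit x : gdnp_eq (tdot te x) x
| g_lsym x y z : gdnp_eq (tsub (tcirc x (tcirc y z)) (tcirc (tcirc x y) z))
                         (tsub (tcirc y (tcirc x z)) (tcirc (tcirc y x) z))
| g_rcom x y z : gdnp_eq (tcirc (tcirc x y) z) (tcirc (tcirc x z) y)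
| g_dotcirc x y z : gdnp_eq (tcirc (tdot x y) z) (tdot x (tcirc y z))
| g_mixed x y z : gdnp_eq (tsub (tdot (tcirc x y) z) (tcirc x (tdot y z)))
                          (tsub (tdot (tcirc y x) z) (tcirc y (tdot x z))).

Definition mono (s : seq X) : T := foldr (fun a t => tdot (tgen a) t) te s.

Definition tsum (s : seq T) : T := foldr (@tadd K X) tzero s.

(* the word a with its i-th letter (0-based) omitted *)
Definition omit (i : nat) (a : seq X) : seq X := take i a ++ drop i.+1 a.

End Free.

(* Main.v *)
Require Import Defs.
From mathcomp Require Import all_boot all_algebra.
From mathcomp Require Import ring.
From Stdlib Require Import Setoid Morphisms.
Import GRing.Theory.
Local Open Scope ring_scope.
Section S.
Variables (K : fieldType) (X : Type).
Local Notation T := (term K X).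
Local Notation "x =~ y" := (@gdnp_eq K X x y) (at level 70).
Local Notation "x +' y" := (tadd x y) (at level 50, left associativity).
Local Notation "a *' x" := (tscale a x) (at level 40).
Local Notation "x .* y" := (tdot x y) (at level 35).
Local Notation "x \oo y" := (tcirc x y) (at level 30).
#[local] Instance eqv : Equivalence (@gdnp_eq K X).
Proof. split; [exact: q_refl| exact: q_sym| exact: q_trans]. Qed.
#[local] Instance p_add : Proper (gdnp_eq (X:=X) ==> gdnp_eq (X:=X) ==> gdnp_eq (X:=X)) (@tadd K X).
Proof. move=> ? ? ? ? ? ?; exact: q_add. Qed.
#[local] Instance p_scale : Proper (eq ==> gdnp_eq (X:=X) ==> gdnp_eq (X:=X)) (@tscale K X).
Proof. move=> ? ? -> ? ? ?; exact: q_scale. Qed.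
#[local] Instance p_dot : Proper (gdnp_eq (X:=X) ==> gdnp_eq (X:=X) ==> gdnp_eq (X:=X)) (@tdot K X).
Proof. move=> ? ? ? ? ? ?; exact: q_dot. Qed.
#[local] Instance p_circ : Proper (gdnp_eq (X:=X) ==> gdnp_eq (X:=X) ==> gdnp_eq (X:=X)) (@tcirc K X).
Proof. move=> ? ? ? ? ? ?; exact: q_circ. Qed.

Implicit Types x y z : T.

Lemma addA x y z : x +' (y +' z) =~ x +' y +' z. Proof. exact: v_addA. Qed.
Lemma addC x y : x +' y =~ y +' x. Proof. exact: v_addC. Qed.
Lemma add0 x : tzero +' x =~ x. Proof. exact: v_add0. Qed.
Lemma addr0 x : x +' tzero =~ x. Proof. rewrite addC; exact: add0. Qed.
Lemma addN x : x +' (-1) *' x =~ tzero. Proof. exact: v_addN. Qed.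
Lemma addCA x y z : x +' (y +' z) =~ y +' (x +' z).
Proof. rewrite addA (addC x y) -addA; reflexivity. Qed.
Lemma scaleA a b x : a *' (b *' x) =~ (a * b) *' x. Proof. exact: v_scaleA. Qed.
Lemma scale1 x : 1 *' x =~ x. Proof. exact: v_scale1. Qed.
Lemma scaleDr a x y : a *' (x +' y) =~ a *' x +' a *' y. Proof. exact: v_scaleDr. Qed.
Lemma scaleDl a b x : (a + b) *' x =~ a *' x +' b *' x. Proof. exact: v_scaleDl. Qed.
Lemma oppK x : (-1) *' ((-1) *' x) =~ x.
Proof. rewrite scaleA mulrNN mulr1 scale1; reflexivity. Qed.
Lemma addIr x y z : x +' z =~ y +' z -> x =~ y.
Proof.
move=> H; rewrite -(addr0 x) -(addr0 y) -(addN z) !addA H; reflexivity.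
Qed.
Lemma subK x y : x +' (-1) *' (x +' (-1) *' y) =~ y.
Proof. rewrite scaleDr oppK addA addN add0; reflexivity. Qed.
Lemma sub_move A B C Y : tsub A B =~ tsub C Y -> Y =~ C +' B +' (-1) *' A.
Proof.
rewrite /tsub => H; rewrite -{1}(subK C Y) -H scaleDr oppK.
rewrite (addC (-1 *' A) B) addA; reflexivity.
Qed.
Lemma scale0 x : 0 *' x =~ tzero.
Proof.
apply: (@addIr _ _ (0 *' x)); rewrite add0 -scaleDl GRing.addr0; reflexivity.
Qed.
Lemma dotC x y : x .* y =~ y .* x. Proof. exact: d_comm. Qed.
Lemma dotA x y z : x .* (y .* z) =~ (x .* y) .* z. Proof. exact: d_assoc. Qed.
Lemma dot1 x : te .* x =~ x. Proof. exact: d_unit. Qed.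
Lemma dotr1 x : x .* te =~ x. Proof. rewrite dotC; exact: dot1. Qed.
Lemma dotDr x y z : x .* (y +' z) =~ x .* y +' x .* z. Proof. exact: b_dotDr. Qed.
Lemma dotZr a x y : x .* (a *' y) =~ a *' (x .* y). Proof. exact: b_dotZr. Qed.
Lemma dot0 x : x .* tzero =~ tzero.
Proof. rewrite -{1}(scale0 tzero) dotZr scale0; reflexivity. Qed.
Lemma circ_dot x z : x \oo z =~ x .* (te \oo z).
Proof. rewrite -{1}(dotr1 x); exact: g_dotcirc. Qed.

Local Notation D w := (te \oo w).
Local Notation E := (te \oo te).

Lemma leibniz x z : D (x .* z) =~ D x .* z +' x .* D z +' (-1) *' ((x .* z) .* E).
Proof.
have H := g_mixed x te z; rewrite /tsub in H.
rewrite (circ_dot x te) (dot1 z) (circ_dot x z) in H.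
rewrite (sub_move _ _ _ _ H) -dotA (dotC E z) dotA; reflexivity.
Qed.

Lemma eq_tsum (I : Type) (f g : I -> T) (s : seq I) :
  (forall p, f p =~ g p) -> tsum [seq f p | p <- s] =~ tsum [seq g p | p <- s].
Proof.
move=> H; elim: s => [|p s IH] /=; first reflexivity.
rewrite H IH; reflexivity.
Qed.

Lemma dot_tsum (I : Type) x (f : I -> T) (s : seq I) :
  x .* tsum [seq f p | p <- s] =~ tsum [seq x .* f p | p <- s].
Proof.
elim: s => [|p s IH] /=; first exact: dot0.
rewrite dotDr IH; reflexivity.
Qed.

Lemma zip_iotaS (I : Type) (f : nat * X -> I) k n (s : seq X) :
  [seq f p | p <- zip (iota k.+1 n) s] =
  [seq f (p.1.+1, p.2) | p <- zip (iota k n) s].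
Proof.
elim: s k n => [|y s IH] k [|n] //=; by rewrite IH; case: (zip _ _).
Qed.

Lemma mono_cat (u v : seq X) : mono K (u ++ v) =~ mono K u .* mono K v.
Proof.
elim: u => [|y u IH] /=; first by rewrite dot1; reflexivity.
rewrite IH dotA; reflexivity.
Qed.

Definition F (a : seq X) : T :=
  tsum [seq mono K (omit p.1 a) .* D (tgen p.2) | p <- zip (iota 0 (size a)) a].

Lemma Dmono (a : seq X) :
  D (mono K a) =~ F a +' (1 - (size a)%:R) *' (mono K a .* E).
Proof.
elim: a => [|y a IH].
  rewrite /F /= subr0 scale1 add0 dot1; reflexivity.
have HF : F (y :: a) =~ mono K a .* D (tgen y) +' tgen y .* F a.
  rewrite /F /= zip_iotaS /omit /= drop0; apply: q_add; first reflexivity.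
  rewrite dot_tsum; apply: eq_tsum => p /=; rewrite dotA; reflexivity.
rewrite /= leibniz IH HF dotDr dotZr (dotC (D (tgen y))) dotA.
have -> : 1 - (size a).+1%:R = (1 - (size a)%:R) + -1 :> K.
  by rewrite -addn1 natrD; ring.
rewrite (scaleDl (1 - (size a)%:R) (-1)) !addA; reflexivity.
Qed.

Lemma main_sec (u a : seq X) (hn : (0 < size a)%N) :
  gdnp_eq (tcirc (mono K u) (mono K a))
    (tadd
       (tsum [seq tcirc (mono K (u ++ omit p.1 a)) (tgen p.2)
             | p <- zip (iota 0 (size a)) a])
       (tscale (- ((size a).-1)%:R) (tcirc (mono K (u ++ a)) te))).
Proof.
rewrite circ_dot Dmono dotDr dotZr.
rewrite (@eq_tsum _ _ (fun p => mono K u .* (mono K (omit p.1 a) .* D (tgen p.2))) _ _); last first.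
  by move=> p; rewrite circ_dot mono_cat -dotA; reflexivity.
rewrite -dot_tsum (circ_dot (mono K (u ++ a)) te) mono_cat -dotA.
have -> : - ((size a).-1)%:R = 1 - (size a)%:R :> K.
  by case: (size a) hn => // n _ /=; rewrite -addn1 natrD; ring.
reflexivity.
Qed.
End S.

Theorem mainTheorem4 (K : fieldType) (X : Type) (u a : seq X)
    (hn : (0 < size a)%N) :
  gdnp_eq (tcirc (mono K u) (mono K a))
    (tadd
       (tsum [seq tcirc (mono K (u ++ omit p.1 a)) (tgen p.2)
             | p <- zip (iota 0 (size a)) a])
       (tscale (- ((size a).-1)%:R) (tcirc (mono K (u ++ a)) te))).
Proof. exact: main_sec. Qed.
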